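(* Let $G$ be a finite group, let $e=c_0,c_1,\dots,c_\ell$ be representatives of its conjugacy classes, and let $\gamma$ be any (not necessarily faithful) $n$-dimensional complex representation of $G$ with character $\chi_\gamma$. Then \[ \frac{1}{|G|}\prod_{i=1}^{\ell}\bigl(n-\chi_\gamma(c_i)\bigr)\in\mathbb{Z}_{\ge 0}. \] *)

(* Defs.v *)
From HB Require Import structures.
From mathcomp Require Import all_boot all_order all_algebra all_fingroup all_solvable all_field all_character.
Set Implicit Arguments. Unset Strict Implicit. Unset Printing Implicit Defensive.

(* Main.v *)
Require Import Defs.
From HB Require Import structures.
From mathcomp Require Import all_boot all_order all_algebra all_fingroup all_solvable all_field all_character.
Import GRing.Theory Num.Theory.
Local Open Scope ring_scope.

Lemma prod_inv_ge0 (T : finType) (A : {set T}) (i : T -> T) (f : T -> algC) :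
  {in A, forall x, i x \in A} -> {in A, forall x, i (i x) = x} ->
  (forall x, x \in A -> f (i x) = (f x)^*) ->
  (forall x, x \in A -> i x = x -> 0 <= f x) -> 0 <= \prod_(x in A) f x.
Proof.
move=> iA iiA fi f0.
move: {2}#|A| (leqnn #|A|) => m; elim: m A iA iiA fi f0 => [|m IH] A iA iiA fi f0 hA.
  by move: hA; rewrite leqn0 cards_eq0 => /eqP ->; rewrite big_set0 ler01.
case: (set_0Vmem A) => [-> | [x xA]]; first by rewrite big_set0 ler01.
have [ix|nix] := eqVneq (i x) x.
  rewrite (bigD1 x) //= mulr_ge0 ?f0 //.
  have -> : \prod_(y in A | y != x) f y = \prod_(y in A :\ x) f y.
    by apply: eq_bigl => y; rewrite !inE andbC.
  apply: IH.
  - move=> y; rewrite !inE => /andP[yx yA]; rewrite iA // andbT.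
    by apply: contraNneq yx => iyx; rewrite -(iiA y yA) iyx ix.
  - by move=> y; rewrite !inE => /andP[_ yA]; apply: iiA.
  - by move=> y; rewrite !inE => /andP[_ yA]; apply: fi.
  - by move=> y; rewrite !inE => /andP[_ yA]; apply: f0.
  - by move: hA; rewrite (cardsD1 x) xA.
have ixA := iA x xA.
rewrite (bigD1 x) //= (bigD1 (i x)) /=; last by rewrite ixA nix.
rewrite mulrA fi // -normCK mulr_ge0 ?exprn_ge0 //.
have -> : \prod_(y | (y \in A) && (y != x) && (y != i x)) f y = \prod_(y in A :\ x :\ i x) f y.
  by apply: eq_bigl => y; rewrite !inE; case: (y \in A); case: (y == x); case: (y == i x).
have iAx y : y \in A -> (i y == x) = (y == i x).
  move=> yA; apply/eqP/eqP => [<-|->]; [by rewrite iiA | by rewrite iiA].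
apply: IH.
- move=> y; rewrite !inE => /and3P[yix yx yA]; rewrite iA // andbT.
  rewrite iAx // yix andbT; apply: contraNneq yx => e.
  by rewrite -(iiA y yA) e iiA.
- by move=> y; rewrite !inE => /and3P[_ _ yA]; apply: iiA.
- by move=> y; rewrite !inE => /and3P[_ _ yA]; apply: fi.
- by move=> y; rewrite !inE => /and3P[_ _ yA]; apply: f0.
- move: hA; rewrite (cardsD1 x) xA (cardsD1 (i x) (A :\ x)) !inE nix ixA.
  by rewrite add1n add1n ltnS => /ltnW.
Qed.

Lemma char_poly_sim {F : fieldType} {m} {A B P : 'M[F]_m} :
  P \in unitmx -> P *m A = B *m P -> char_poly A = char_poly B.
Proof.
move=> uP eP.
pose Pp := map_mx (@polyC F) P.
have e : char_poly_mx B *m Pp = Pp *m char_poly_mx A.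
  rewrite /char_poly_mx mulmxBl mulmxBr mul_scalar_mx mul_mx_scalar.
  by rewrite /Pp -!map_mxM eP.
have := congr1 determinant e; rewrite !det_mulmx /Pp det_map_mx /=.
have nz : (\det P)%:P != 0 by rewrite polyC_eq0 -unitfE -unitmxE.
by rewrite mulrC => /(mulfI nz).
Qed.

Lemma int_part (gT : finGroupType) (G : {group gT}) (n : nat)
    (rG : mx_representation algC G n) :
  exists2 Q : {poly algC}, (forall k, Q`_k \is a Num.int) &
    (forall x, x \in G -> x != 1%g -> Q.[cfRepr rG x] = 0) /\
    Q.[n%:R] = \prod_(xG in classes G | xG != 1%g) (n%:R - cfRepr rG (repr xG)).
Proof.
set chi := cfRepr rG.
pose d (j : Iirr G) := chi (repr (irr_class j)).
pose M : 'M[algC]_(Nirr G) := \matrix_(i, j) '[chi * 'chi_i, 'chi_j].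
pose M' : 'M[int]_(Nirr G) := \matrix_(i, j) (Num.truncn (M i j))%:Z.
have hM : map_mx intr M' = M.
  apply/matrixP => i j; rewrite !mxE /=.
  rewrite -[RHS](truncnK (Cnat_cfdot_char _ (irr_char j))) //.
  by rewrite rpredM ?cfRepr_char ?irr_char.
have simX : character_table G *m diag_mx (\row_j d j) = M *m character_table G.
  apply/matrixP => i k; rewrite mul_mx_diag !mxE mulrC.
  have := congr1 (fun phi : 'CF(G) => phi (repr (irr_class k))) (cfun_sum_cfdot (chi * 'chi_i)).
  rewrite cfunE sum_cfunE => ->; apply: eq_bigr => j _.
  by rewrite cfunE !mxE.
have cpM : char_poly M = \prod_j ('X - (d j)%:P).
  rewrite -(char_poly_sim (character_table_unit G) simX) char_poly_trig ?diag_mx_is_trig //.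
  by apply: eq_bigr => j _; rewrite !mxE eqxx mulr1n.
pose p' := char_poly M'.
have hp : map_poly intr p' = \prod_j ('X - (d j)%:P) by rewrite map_char_poly hM.
pose j0 := @class_Iirr gT G 1%g.
have hc0 : irr_class j0 = 1%g := class_IirrK (classes1 G).
have hd0 : d j0 = n%:R by rewrite /d hc0 -(class1G G) cfun_repr cfRepr1.
have hceq j : (irr_class j == 1%g) = (j == j0) by rewrite -hc0 (can_eq irr_classK).
have nR : (n%:Z)%:~R = n%:R :> algC by rewrite -pmulrn.
have : root p' n%:Z.
  rewrite /root -(intr_eq0 algC) -horner_map hp horner_prod (bigD1 j0) //=.
  by rewrite hornerXsubC hd0 nR subrr mul0r.
case/factor_theorem => q' hq.
pose Q : {poly algC} := map_poly intr q'.
have hq' : map_poly intr p' = Q * ('X - (n%:R : algC)%:P).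
  by rewrite hq rmorphM /= map_polyXsubC -nR.
have hQ : Q = \prod_(j | j != j0) ('X - (d j)%:P).
  apply: (mulIf (negbT (polyXsubC_eq0 (n%:R : algC)))).
  by rewrite -hq' hp (bigD1 j0) //= hd0 mulrC.
exists Q; first by move=> k; rewrite coef_map intr_int.
split.
  move=> x Gx x1; rewrite hQ horner_prod (bigD1 (@class_Iirr gT G (x ^: G)%g)) /=; last first.
    rewrite -hceq class_IirrK ?mem_classes //; apply: contra x1 => /eqP e.
    by have := class_refl G x; rewrite e inE.
  by rewrite hornerXsubC /d class_IirrK ?mem_classes // cfun_repr subrr mul0r.
rewrite hQ horner_prod big_mkcondr reindex_irr_class /= [LHS]big_mkcond.
by apply: eq_bigr => j _; rewrite hceq hornerXsubC.
Qed.

Theorem corollary2p6 (gT : finGroupType) (G : {group gT}) (n : nat)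
    (rG : mx_representation algC G n) :
  (#|G|%:R)^-1 * \prod_(xG in classes G | xG != 1%g) (n%:R - cfRepr rG (repr xG))
    \in Num.nat.
Proof.
have [Q Qint [Q0 Qn]] := int_part _ _ _ rG.
set chi := cfRepr rG.
rewrite natrEint; apply/andP; split.
  rewrite -Qn.
  have -> : Q.[n%:R] = \sum_(x in G) Q.[chi x].
    rewrite (bigD1 1%g) ?group1 //= big1 ?addr0 ?cfRepr1 // => x /andP[Gx x1].
    exact: Q0.
  have -> : \sum_(x in G) Q.[chi x] = \sum_(k < size Q) Q`_k * \sum_(x in G) chi x ^+ k.
    rewrite (eq_bigr (fun x => \sum_(k < size Q) Q`_k * chi x ^+ k)); last first.
      by move=> x _; rewrite horner_coef.
    by rewrite exchange_big /=; apply: eq_bigr => k _; rewrite mulr_sumr.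
  rewrite mulr_sumr rpred_sum // => k _.
  rewrite mulrCA rpredM // intr_nat //.
  have -> : #|G|%:R^-1 * \sum_(x in G) chi x ^+ k = '[chi ^+ k, 1].
    rewrite cfdotE; congr (_ * _); apply: eq_bigr => x Gx.
    by rewrite exp_cfunE // cfun1E Gx conjC1 mulr1.
  by rewrite Cnat_cfdot_char ?cfun1_char // rpredX ?cfRepr_char.
rewrite mulr_ge0 ?invr_ge0 ?ler0n //.
pose A := [set xG in classes G | xG != 1%g].
have -> : \prod_(xG in classes G | xG != 1%g) (n%:R - chi (repr xG))
    = \prod_(xG in A) (n%:R - chi (repr xG)).
  by apply: eq_bigl => xG; rewrite inE.
apply: (@prod_inv_ge0 _ A (fun xG => ((repr xG)^-1 ^: G)%g)).
- move=> xG; rewrite !inE => /andP[cG x1]; have [Gr exG] := repr_classesP cG.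
  rewrite mem_classes ?groupV //=; apply: contra x1 => /eqP e.
  have : ((repr xG)^-1 \in (repr xG)^-1 ^: G)%g by apply: class_refl.
  rewrite e inE invg_eq1 => /eqP r1.
  by rewrite exG r1 class1G.
- move=> xG; rewrite inE => /andP[cG _]; have [Gr exG] := repr_classesP cG.
  have := mem_repr _ (class_refl G (repr xG)^-1%g) => /class_eqP e.
  by rewrite classVg e -classVg invgK -exG.
- move=> xG; rewrite inE => /andP[cG _] /=.
  by rewrite cfun_repr char_inv ?cfRepr_char // rmorphB /= conjC_nat.
- move=> xG; rewrite inE => /andP[cG _] e.
  have : chi (repr ((repr xG)^-1 ^: G))%g = chi (repr xG) by rewrite e.
  rewrite cfun_repr char_inv ?cfRepr_char // => /eqP; rewrite -CrealE => hr.
  rewrite subr_ge0 (Order.POrderTheory.le_trans (real_ler_norm hr)) //.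
  by rewrite -(cfRepr1 rG) char1_ge_norm ?cfRepr_char.
Qed.
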